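(* For every non-constant total symmetric Boolean function $f:\{0,1\}^n\to\{0,1\}$ with $n\ge 2$, $\mathrm{MM}'(f)=O(\sqrt{t_f\cdot n})$.
   Context: A Boolean function $f:\{0,1\}^n\to\{0,1\}$ is symmetric if $f(x)$ depends only on the Hamming weight $|x|$ (number of ones). For such $f$, $t_f$ is the minimum nonnegative integer $t$ such that $f$ is constant on all inputs $x$ with $t\le|x|\le n-t$. For $f$ with domain $D\subseteq\{0,1\}^n$, \[ \mathrm{MM}'(f)=\min_{w}\max_{x\in D}\sum_{i\in[n]} w(x,i) \] over weight functions $w:D\times[n]\to\mathbb{R}_{\ge0}$ subject to $\sum_{i:x_i\neq y_i} w(x,i)\,w(y,i)\ge 1$ for all $x,y\in D$ with $f(x)\neq f(y)$. *)

(* Defs.v *)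
From HB Require Import structures.
From mathcomp Require Import all_boot all_order all_algebra.
From mathcomp Require Import all_classical all_reals.
Set Implicit Arguments. Unset Strict Implicit. Unset Printing Implicit Defensive.
Import Order.TTheory GRing.Theory Num.Theory.

Definition input (n : nat) := {ffun 'I_n -> bool}.

Definition hw (n : nat) (x : input n) : nat := #|[set i | x i]|.

Definition symmetric_fn (n : nat) (f : input n -> bool) : Prop :=
  forall x y : input n, hw x = hw y -> f x = f y.

Definition nonconstant (n : nat) (f : input n -> bool) : Prop :=
  exists x y : input n, f x != f y.

Definition const_between (n : nat) (f : input n -> bool) (t : nat) : bool :=
  [forall x : input n, forall y : input n,
     [&& t <= hw x, hw x <= n - t, t <= hw y & hw y <= n - t] ==> (f x == f y)].

Lemma const_between_exists (n : nat) (f : input n -> bool) :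
  exists t, const_between f t.
Proof.
exists n.+1; apply/forallP => x; apply/forallP => y; apply/implyP.
case/and4P => h1 h2 _ _.
have : n.+1 <= n - n.+1 by apply: leq_trans h2.
by rewrite subnS subnn.
Qed.

Definition tf (n : nat) (f : input n -> bool) : nat :=
  ex_minn (const_between_exists f).

Local Open Scope ring_scope.

Definition feasible_weight (R : realType) (n : nat) (f : input n -> bool)
    (w : input n -> 'I_n -> R) : Prop :=
  (forall x i, 0 <= w x i) /\
  (forall x y : input n, f x != f y ->
     1 <= \sum_(i < n | x i != y i) w x i * w y i).

(* max_{x in D} sum_i w(x,i)  (all sums are >= 0, so 0 is a neutral start). *)
Definition weight_cost (R : realType) (n : nat) (w : input n -> 'I_n -> R) : R :=
  \big[Num.max/0]_(x : input n) \sum_(i < n) w x i.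

(* MM'(f) = min over feasible w of the cost (taken as an infimum). *)
Definition MMprime (R : realType) (n : nat) (f : input n -> bool) : R :=
  inf [set c : R | exists w, feasible_weight f w /\ c = weight_cost w].

(* Main.v *)
Require Import Defs.
From HB Require Import structures.
From mathcomp Require Import all_boot all_order all_algebra.
From mathcomp Require Import all_classical all_reals.
From mathcomp Require Import zify.
Import Order.TTheory GRing.Theory Num.Theory.
Local Open Scope ring_scope.

Lemma a1 t k : (1 <= t)%N -> (k <= t * maxn 1 (k.+1 - t))%N.
Proof. move=> ht. nia. Qed.
Lemma a2 n t k : (1 <= t)%N -> (n - k <= t * maxn 1 (n.+1 - t - k))%N.
Proof. move=> ht. nia. Qed.
Lemma a3 t j m : (j < t)%N -> (j < m)%N -> (maxn 1 (m.+1 - t) <= m - j)%N.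
Proof. lia. Qed.
Lemma a4 n t j m : (n - t < m)%N -> (j < m)%N -> (maxn 1 (n.+1 - t - j) <= m - j)%N.
Proof. lia. Qed.

Definition Qn t m : nat := maxn 1 (m.+1 - t).
Definition Pn n t j : nat := maxn 1 (n.+1 - t - j).

Section W.
Variable R : realType.
Variables (n t : nat).
Hypothesis (hn : (0 < n)%N) (ht : (0 < t)%N).

Let s : R := Num.sqrt ((t * n)%:R).
Let r : R := s / n%:R.
Let u : R := n%:R / s.

Lemma s_gt0 : 0 < s.
Proof. by rewrite sqrtr_gt0 ltr0n muln_gt0 ht hn. Qed.
Lemma r_gt0 : 0 < r. Proof. by rewrite divr_gt0 ?s_gt0 ?ltr0n. Qed.
Lemma u_gt0 : 0 < u. Proof. by rewrite divr_gt0 ?s_gt0 ?ltr0n. Qed.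
Lemma ru : r * u = 1.
Proof.
rewrite /r /u mulrA divfK ?pnatr_eq0 -?lt0n // divff //.
by have := s_gt0; rewrite lt0r => /andP[].
Qed.
Lemma nr : n%:R * r = s.
Proof. by rewrite /r mulrC divfK // pnatr_eq0 -lt0n. Qed.
Lemma tu : t%:R * u = s.
Proof.
have s0 : s != 0 by have := s_gt0; rewrite lt0r => /andP[].
rewrite /u mulrA -natrM; apply: (mulIf s0); rewrite divfK // -expr2 /s sqr_sqrtr //.
Qed.

Definition wt (x : input n) (i : 'I_n) : R :=
  r + (if x i then u / (Qn t (hw x))%:R else u / (Pn n t (hw x))%:R).


Lemma sum_const_pred (P : pred 'I_n) (c : R) :
  \sum_(i | P i) c = c *+ #|[set i | P i]|.
Proof. by rewrite -big_set /= sumr_const. Qed.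

Lemma card_neg (x : input n) : #|[set i | ~~ x i]| = (n - hw x)%N.
Proof.
have h := cardsC [set i | x i]; rewrite card_ord in h.
have e : ~: [set i | x i] = [set i | ~~ x i] by apply/setP => i; rewrite !inE.
rewrite e in h; rewrite /hw; lia.
Qed.

Lemma hw_le (x : input n) : (hw x <= n)%N.
Proof. by rewrite /hw -[X in (_ <= X)%N](card_ord n) max_card. Qed.

Lemma Qpos m : (0 < Qn t m)%N. Proof. rewrite /Qn; lia. Qed.
Lemma Ppos m : (0 < Pn n t m)%N. Proof. rewrite /Pn; lia. Qed.

Lemma bnd (k q : nat) : (0 < q)%N -> (k <= t * q)%N -> (u / q%:R) *+ k <= s.
Proof.
move=> q0 hk; rewrite -tu -mulr_natl mulrCA [_ * u]mulrC ler_wpM2l ?(ltW u_gt0) //.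
rewrite ler_pdivrMr ?ltr0n // -natrM ler_nat; lia.
Qed.

Lemma wt_ge0 x i : 0 <= wt x i.
Proof.
rewrite /wt addr_ge0 ?(ltW r_gt0) //; case: (x i);
  by rewrite divr_ge0 ?(ltW u_gt0) ?ler0n.
Qed.

Lemma cost x : \sum_i wt x i <= 3%:R * s.
Proof.
rewrite big_split /= sumr_const card_ord -[r *+ n]mulr_natl nr.
rewrite (bigID (fun i => x i)) /=.
rewrite (eq_bigr (fun _ => u / (Qn t (hw x))%:R)); last by move=> i ->.
rewrite [X in _ + (_ + X)](eq_bigr (fun _ => u / (Pn n t (hw x))%:R)); last by move=> i /negbTE ->.
rewrite !sum_const_pred card_neg.
have h1 := @bnd (hw x) _ (Qpos (hw x)) (a1 t (hw x) ht).
have h2 := @bnd (n - hw x)%N _ (Ppos (hw x)) (a2 n t (hw x) ht).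
rewrite -[hw x]/#|[set i | x i]| in h1 *.
have -> : (3%:R : R) * s = s + (s + s) by rewrite (_ : 3%:R = 1 + (1 + 1)) ?mulrDl ?mul1r // -!natr1 addrC.
by rewrite lerD2l lerD.
Qed.

Lemma feas x y : (hw x < hw y)%N -> (hw x < t)%N || (n - t < hw y)%N ->
  1 <= \sum_(i | x i != y i) wt x i * wt y i.
Proof.
move=> jm hc.
set j := hw x; set m := hw y.
have D : (m - j <= #|[set i | ~~ x i && y i]|)%N.
  have sub : [set i | y i] \subset [set i | x i] :|: [set i | ~~ x i && y i].
    by apply/fintype.subsetP => i; rewrite !inE; case: (x i); case: (y i).
  have := subset_leq_card sub; have := cardsU [set i | x i] [set i | ~~ x i && y i].
  rewrite -/(hw y) -/(hw x) -/m -/j; lia.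
set c := (r + u / (Pn n t j)%:R) * (r + u / (Qn t m)%:R).
have st1 : \sum_(i | ~~ x i && y i) wt x i * wt y i <= \sum_(i | x i != y i) wt x i * wt y i.
  rewrite [X in X <= _]big_mkcond [X in _ <= X]big_mkcond; apply: ler_sum => i _.
  by case: (x i); case: (y i) => //=; rewrite mulr_ge0 ?wt_ge0.
have st2 : c *+ #|[set i | ~~ x i && y i]| <= \sum_(i | ~~ x i && y i) wt x i * wt y i.
  rewrite -sum_const_pred; apply: ler_sum => i /andP[/negbTE xi yi].
  by rewrite /wt xi yi.
apply: le_trans st1; apply: le_trans st2.
have a0 : 0 <= u / (Pn n t j)%:R by rewrite divr_ge0 ?(ltW u_gt0) ?ler0n.
have b0 : 0 <= u / (Qn t m)%:R by rewrite divr_ge0 ?(ltW u_gt0) ?ler0n.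
have r0 := ltW r_gt0.
have key : forall q : nat, (0 < q)%N -> (q <= m - j)%N -> r * (u / q%:R) <= c ->
    1 <= c *+ #|[set i | ~~ x i && y i]|.
  move=> q q0 hq hrc.
  apply: (@le_trans _ _ (c *+ (m - j))); last by apply: ler_wpMn2l D; apply: le_trans hrc; rewrite mulr_ge0 // divr_ge0 ?(ltW u_gt0) ?ler0n.
  apply: (@le_trans _ _ ((r * (u / q%:R)) *+ (m - j))); last by apply: ler_wMn2r.
  rewrite mulrA ru mul1r -mulr_natr mulrC ler_pdivlMr ?ltr0n // mul1r ler_nat //.
case/orP: hc => hc.
  apply: (key _ (Qpos m) (a3 _ _ _ hc jm)).
  by rewrite /c ler_pM // ?lerDl ?lerDr.
apply: (key _ (Ppos j) (a4 _ _ _ _ hc jm)).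
by rewrite /c mulrC ler_pM // ?lerDl ?lerDr.
Qed.

End W.

Theorem mainTheorem5 (R : realType) :
  exists C : R, forall (n : nat) (f : input n -> bool),
    (2 <= n)%N -> symmetric_fn f -> nonconstant f ->
    MMprime R f <= C * Num.sqrt (((tf f) * n)%:R).
Proof.
exists 3%:R => n f hn hsym hnc.
have ct : const_between f (tf f) by rewrite /tf; case: ex_minnP.
have hn0 : (0 < n)%N by lia.
have ht : (0 < tf f)%N.
  rewrite lt0n; apply/negP => /eqP t0; move: ct; rewrite t0.
  case: hnc => x [y nxy] /forallP /(_ x) /forallP /(_ y) /implyP.
  rewrite !subn0 !hw_le // => /(_ isT) /eqP exy.
  by rewrite exy eqxx in nxy.
set t := tf f in ct ht *.
set w := wt R n t.
have fw : feasible_weight f w.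
  split; first by move=> x i; exact: wt_ge0.
  have gen : forall x y : input n, f x != f y -> (hw x < hw y)%N ->
      1 <= \sum_(i | x i != y i) w x i * w y i.
    move=> x y fxy lt; apply: feas => //.
    move: ct => /forallP /(_ x) /forallP /(_ y) /implyP ct.
    have : ~~ [&& (t <= hw x)%N, (hw x <= n - t)%N, (t <= hw y)%N & (hw y <= n - t)%N].
      by apply/negP => /ct /eqP e; rewrite e eqxx in fxy.
    case: (leqP t (hw x)); case: (leqP (hw x) (n - t)); case: (leqP t (hw y));
      case: (leqP (hw y) (n - t)) => /= *; lia.
  move=> x y fxy.
  have : hw x != hw y by apply/negP => /eqP /hsym e; rewrite e eqxx in fxy.
  case: ltngtP => // lt _; first exact: gen.
  rewrite (eq_bigl (fun i => y i != x i)); last by move=> i; rewrite eq_sym.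
  rewrite (eq_bigr (fun i => w y i * w x i)); last by move=> i _; rewrite mulrC.
  by apply: gen; rewrite // eq_sym.
have c0 : forall w' : input n -> 'I_n -> R, (forall x i, 0 <= w' x i) ->
    0 <= weight_cost w'.
  move=> w' hw'; rewrite /weight_cost; elim/big_ind: _ => //.
    by move=> a b ha hb; rewrite le_max ha.
  by move=> x _; apply: sumr_ge0.
have s0 : 0 <= 3%:R * Num.sqrt ((t * n)%:R) :> R by rewrite mulr_ge0 ?ler0n ?sqrtr_ge0.
apply: (@le_trans _ _ (weight_cost w)).
  apply: ge_inf; last by exists w.
  by exists 0 => c [w' [[hw' _] ->]]; exact: c0.
rewrite /weight_cost; elim/big_ind: _ => //.
  by move=> a b ha hb; rewrite ge_max ha hb.
by move=> x _; apply: cost.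
Qed.
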